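(* Let $\mathfrak m_N=(\mathbb RZ_\delta+\mathbb RW_\delta)+\sum_{\gamma\in\Delta_+\cup\Delta_-}(\mathbb RZ_\gamma+\mathbb RW_\gamma)$. Then $[iA_\beta,\mathfrak m_N]\subset\mathfrak m_N$, $[Z_\beta,\mathfrak m_N]\perp\mathfrak m_N$ and $[W_\beta,\mathfrak m_N]\perp\mathfrak m_N$, where orthogonality is with respect to $\langle\,,\,\rangle$.
   Context: Let $\mathfrak g$ be a compact simple Lie algebra not isomorphic to $\mathfrak{sp}(n)$, $\mathfrak a$ a maximal abelian subalgebra, $\tau$ the conjugation of $\mathfrak g^{\mathbb C}$ w.r.t. $\mathfrak g$, $(\,,\,)$ the Killing form of $\mathfrak g^{\mathbb C}$, $\langle\,,\,\rangle=-(\,,\,)|_{\mathfrak g\times\mathfrak g}$, $\Sigma$ the root system w.r.t. $\mathfrak a^{\mathbb C}$; for $\alpha\in\Sigma$, $H_\alpha\in i\mathfrak a$ with $\alpha(H)=(H_\alpha,H)$, $(\alpha,\gamma)=(H_\alpha,H_\gamma)$, $A_\alpha=\frac2{(\alpha,\alpha)}H_\alpha$. $\Sigma^+$ positive roots, $\beta$ the highest root, $\Sigma_{\gamma,n}=\{\alpha\in\Sigma:2(\gamma,\alpha)/(\gamma,\gamma)=n\}$, $\Sigma^+_{\gamma,n}=\Sigma_{\gamma,n}\cap\Sigma^+$. Root vectors $X_\alpha$ satisfy $\tau(X_\alpha)=-X_{-\alpha}$, $[X_\alpha,X_{-\alpha}]=A_\alpha$, $[X_\alpha,X_\gamma]=\pm(q+1)X_{\alpha+\gamma}$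 if $\alpha+\gamma\in\Sigma$ ($q$ maximal with $\gamma-q\alpha\in\Sigma$), $0$ if $\alpha+\gamma\notin\Sigma\cup\{0\}$. For $\alpha\in\Sigma^+$, $Z_\alpha=X_\alpha-X_{-\alpha}$, $W_\alpha=i(X_\alpha+X_{-\alpha})$. Fix $\delta\in\Sigma_{\beta,1}$ with $(\delta,\delta)=(\beta,\beta)$, and set $\Delta_+=\{\delta-\gamma:\gamma\in\Sigma^+_{\beta,0}\cap\Sigma_{\delta,1}\}$, $\Delta_-=\{\delta+\gamma:\gamma\in\Sigma^+_{\beta,0}\cap\Sigma_{\delta,-1}\}$ (these are subsets of $\Sigma_{\beta,1}\subset\Sigma^+$). *)

(* Defs.v *)
(* Setting: compact simple Lie algebras, modelled through
   their complexification, a finite-dimensional vector space over C = R[i]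
   (R an arbitrary real closed field, e.g. the reals). *)
From mathcomp Require Import all_boot all_order all_algebra.
From mathcomp Require Import complex.
Set Implicit Arguments. Unset Strict Implicit. Unset Printing Implicit Defensive.
Import Order.TTheory GRing.Theory Num.Theory.
Local Open Scope ring_scope.

Definition rC (R : rcfType) (r : R) : R[i] := (r%:C)%C.

Section LieSetup.
Variables (R : rcfType) (V : vectType R[i]).
Local Notation C := R[i].

Variable br : V -> V -> V.

Definition lie_bracket : Prop :=
  [/\ (forall (c : C) x y z, br (c *: x + y) z = c *: br x z + br y z),
      (forall (c : C) x y z, br x (c *: y + z) = c *: br x y + br x z),
      (forall x, br x x = 0) &
      (forall x y z, br x (br y z) + br y (br z x) + br z (br x y) = 0)].

Definition killing (x y : V) : C :=
  \sum_(i < \dim (fullv : {vspace V}))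
     coord (vbasis fullv) i (br x (br y (tnth (vbasis fullv) i))).

Definition ip (x y : V) : C := - killing x y.

Variable tau : V -> V.

Definition conjugation : Prop :=
  [/\ (forall x y, tau (x + y) = tau x + tau y),
      (forall (c : C) x, tau (c *: x) = c^* *: tau x),
      (forall x, tau (tau x) = x) &
      (forall x y, tau (br x y) = br (tau x) (tau y))].

Definition in_g (x : V) : Prop := tau x = x.

Definition real_subspace (P : V -> Prop) : Prop :=
  [/\ P 0, (forall x y, P x -> P y -> P (x + y)) &
      (forall (r : R) x, P x -> P (rC r *: x))].

Definition compact_simple : Prop :=
  [/\ (forall x, in_g x -> x != 0 -> killing x x < 0),
      (exists x y, [/\ in_g x, in_g y & br x y != 0]) &
      (forall I : V -> Prop, real_subspace I -> (forall x, I x -> in_g x) ->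
         (forall x y, in_g x -> I y -> I (br x y)) ->
         (forall x, I x -> x = 0) \/ (forall x, in_g x -> I x))].

Definition Jmx (n : nat) : 'M[C]_(n + n) := block_mx 0 1%:M (- 1%:M) 0.
Definition in_sp (n : nat) (M : 'M[C]_(n + n)) : Prop :=
  (map_mx Num.conj M)^T = - M /\ M^T *m Jmx n + Jmx n *m M = 0.

Definition iso_to_sp (n : nat) : Prop :=
  exists phi : V -> 'M[C]_(n + n),
  [/\ (forall x y, in_g x -> in_g y -> phi (x + y) = phi x + phi y),
      (forall (r : R) x, in_g x -> phi (rC r *: x) = rC r *: phi x),
      (forall x y, in_g x -> in_g y ->
          phi (br x y) = phi x *m phi y - phi y *m phi x),
      (forall x y, in_g x -> in_g y -> phi x = phi y -> x = y) &
      (forall x, in_g x -> in_sp (phi x)) /\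
      (forall M, in_sp M -> exists2 x, in_g x & phi x = M)].

Definition abelian (P : V -> Prop) : Prop :=
  forall x y, P x -> P y -> br x y = 0.

Definition max_abelian (A : V -> Prop) : Prop :=
  [/\ real_subspace A, (forall x, A x -> in_g x), abelian A &
      (forall B : V -> Prop, real_subspace B -> (forall x, B x -> in_g x) ->
         abelian B -> (forall x, A x -> B x) -> forall x, B x -> A x)].

Variable A : V -> Prop.

Definition in_aC (h : V) : Prop := exists a b, [/\ A a, A b & h = a + 'i *: b].
Definition in_ia (h : V) : Prop := exists2 a, A a & h = 'i *: a.

(* Roots.  A root alpha is identified with H_alpha in i a, where        *)
(* alpha(H) = (H_alpha, H).                                             *)
Definition root_space (Ha X : V) : Prop :=
  forall h, in_aC h -> br h X = killing Ha h *: X.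

Definition is_root (Ha : V) : Prop :=
  [/\ in_ia Ha, Ha != 0 & exists2 X, X != 0 & root_space Ha X].

Definition coroot (Ha : V) : V := (2 / killing Ha Ha) *: Ha.

Definition in_Sigma_n (g : V) (n : int) (a : V) : Prop :=
  is_root a /\ 2 * killing g a / killing g g = n%:~R.

Definition positive_system (P : V -> Prop) : Prop :=
  exists2 H0, in_ia H0 &
    (forall a, is_root a -> killing H0 a != 0) /\
    (forall a, P a <-> is_root a /\ 0 < killing H0 a).

Definition highest_root (P : V -> Prop) (beta : V) : Prop :=
  P beta /\ forall a, is_root a ->
    exists s : seq V, (forall x, x \in s -> P x) /\ beta - a = \sum_(x <- s) x.

Definition qmax (a g : V) (q : nat) : Prop :=
  is_root (g - q%:R *: a) /\ forall q', is_root (g - q'%:R *: a) -> (q' <= q)%N.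

Definition root_vectors (X : V -> V) : Prop :=
  forall a, is_root a ->
  [/\ X a != 0, root_space a (X a), tau (X a) = - X (- a),
      br (X a) (X (- a)) = coroot a &
      forall g, is_root g ->
        (is_root (a + g) -> forall q, qmax a g q ->
            exists s : bool, br (X a) (X g) = ((-1) ^+ s * (q.+1)%:R) *: X (a + g))
        /\ (~ is_root (a + g) -> a + g != 0 -> br (X a) (X g) = 0)].

Variable X : V -> V.
Definition Zv (a : V) : V := X a - X (- a).
Definition Wv (a : V) : V := 'i *: (X a + X (- a)).

Variables (P : V -> Prop) (beta delta : V).

Definition in_Delta_plus (x : V) : Prop :=
  exists g, [/\ P g, in_Sigma_n beta 0 g, in_Sigma_n delta 1 g & x = delta - g].
Definition in_Delta_minus (x : V) : Prop :=
  exists g, [/\ P g, in_Sigma_n beta 0 g, in_Sigma_n delta (-1) g & x = delta + g].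

Definition in_mN (x : V) : Prop :=
  exists s : seq (R * R * V),
    (forall t, t \in s -> t.2 = delta \/ in_Delta_plus t.2 \/ in_Delta_minus t.2) /\
    x = \sum_(t <- s) (rC t.1.1 *: Zv t.2 + rC t.1.2 *: Wv t.2).

End LieSetup.

(* Main.v *)
Require Import Defs.
From mathcomp Require Import all_boot all_order all_algebra.
From mathcomp Require Import complex.
From mathcomp Require Import ring.
From Stdlib Require Classical_Prop.
Set Implicit Arguments. Unset Strict Implicit. Unset Printing Implicit Defensive.
Import Order.TTheory GRing.Theory Num.Theory.
Local Open Scope ring_scope.

Section Basics.
Variables (R : rcfType) (V : vectType R[i]).
Local Notation C := R[i].

Definition lin (f : V -> V) := forall (c : C) u v, f (c *: u + v) = c *: f u + f v.

Lemma lin0 f : lin f -> f 0 = 0.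
Proof.
move=> Hf; have H := Hf 1 0 0; rewrite !scale1r addr0 in H.
by move: H; rewrite -{1}[f 0]addr0 => /addrI/esym.
Qed.

Lemma linD f : lin f -> forall u v, f (u + v) = f u + f v.
Proof. by move=> Hf u v; have := Hf 1 u v; rewrite !scale1r. Qed.

Lemma linZ f : lin f -> forall c u, f (c *: u) = c *: f u.
Proof. by move=> Hf c u; rewrite -[c *: u]addr0 Hf lin0 // addr0. Qed.

Lemma linN f : lin f -> forall u, f (- u) = - f u.
Proof. by move=> Hf u; rewrite -scaleN1r linZ // scaleN1r. Qed.

Lemma linB f : lin f -> forall u v, f (u - v) = f u - f v.
Proof. by move=> Hf u v; rewrite linD // linN. Qed.

Lemma lin_sum f (I : Type) (r : seq I) (Pr : pred I) (F : I -> V) : lin f ->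
  f (\sum_(i <- r | Pr i) F i) = \sum_(i <- r | Pr i) f (F i).
Proof.
move=> Hf; apply: (big_morph f (linD Hf) (lin0 Hf)).
Qed.

Lemma lin_comp f g : lin f -> lin g -> lin (f \o g).
Proof. by move=> Hf Hg c u v /=; rewrite Hg Hf. Qed.

Definition ebas := vbasis (fullv : {vspace V}).
Definition trf (f : V -> V) : C :=
  \sum_(i < \dim (fullv : {vspace V})) coord ebas i (f (tnth ebas i)).

Lemma trfB f g : trf (fun u => f u - g u) = trf f - trf g.
Proof. by rewrite /trf -sumrB; apply: eq_bigr => i _; rewrite linearB. Qed.

Lemma trf_ext f g : (forall u, f u = g u) -> trf f = trf g.
Proof. by move=> H; apply: eq_bigr => i _; rewrite H. Qed.

Lemma expand v : v = \sum_(j < \dim (fullv : {vspace V})) coord ebas j v *: tnth ebas j.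
Proof.
rewrite {1}(coord_vbasis (memvf v)); apply: eq_bigr => j _.
by rewrite (tnth_nth 0).
Qed.

Lemma trf_comm f g : lin f -> lin g -> trf (f \o g) = trf (g \o f).
Proof.
move=> Hf Hg; rewrite /trf.
have E : forall (f g : V -> V), lin f -> lin g -> forall i,
  coord ebas i ((f \o g) (tnth ebas i)) =
  \sum_(j < \dim (fullv : {vspace V})) coord ebas j (g (tnth ebas i)) * coord ebas i (f (tnth ebas j)).
  move=> f1 g1 Hf1 Hg1 i /=; rewrite {1}[g1 _]expand lin_sum // linear_sum.
  by apply: eq_bigr => j _; rewrite linZ // linearZ.
rewrite (eq_bigr _ (fun i _ => E f g Hf Hg i)) (eq_bigr _ (fun i _ => E g f Hg Hf i)).
rewrite exchange_big; apply: eq_bigr => i _; apply: eq_bigr => j _.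
by rewrite mulrC.
Qed.


Lemma eig_indep (L : V -> V) (v : nat -> V) (lam : nat -> C) :
  lin L -> (forall k, v k != 0) -> (forall k, L (v k) = lam k *: v k) ->
  injective lam -> False.
Proof.
move=> HL vnz hv linj.
have P : forall n (k : nat -> C), \sum_(i < n) k i *: v i = 0 ->
    forall i, (i < n)%N -> k i = 0.
  elim=> [|n IH] k H i lt; first by [].
  have E : forall i, L (k i *: v i) - lam n *: (k i *: v i) =
                      (k i * (lam i - lam n)) *: v i.
    by move=> j; rewrite linZ // hv !scalerA -scalerBl; congr (_ *: _); ring.
  have H3 : \sum_(i < n.+1) (k i * (lam i - lam n)) *: v i = 0.
    rewrite -(eq_bigr _ (fun (i : 'I_n.+1) _ => E i)) sumrB -lin_sum // -scaler_sumr.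
    by rewrite H lin0 // scaler0 subr0.
  rewrite big_ord_recr /= subrr mulr0 scale0r addr0 in H3.
  have Hk : forall j, (j < n)%N -> k j = 0.
    move=> j ltj; have := IH (fun i => k i * (lam i - lam n)) H3 j ltj => /eqP; rewrite mulf_eq0 subr_eq0.
    case/orP => [/eqP //|/eqP /linj ejn]; by rewrite ejn ltnn in ltj.
  rewrite ltnS leq_eqVlt in lt; case/orP: lt => [/eqP ->|]; last exact: Hk.
  rewrite big_ord_recr /= big1 ?add0r in H.
    by move/eqP: H; rewrite scaler_eq0 (negbTE (vnz n)) orbF => /eqP.
  by move=> j _; rewrite Hk // scale0r.
pose N := \dim (fullv : {vspace V}).
pose Xt := [tuple v i | i < N.+1].
have fX : free Xt.
  apply/freeP => k Hk i.
  have := P N.+1 (fun j => k (inord j)).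
  rewrite (eq_bigr (fun j => k j *: Xt`_j)); last first.
    by move=> j _; rewrite inord_val -tnth_nth tnth_mktuple.
  by move=> /(_ Hk i (ltn_ord i)); rewrite inord_val.
have := dimvS (subvf <<Xt>>%VS); rewrite (eqP fX) size_tuple.
by rewrite -/N ltnn.
Qed.

Section Lie.
Variable br : V -> V -> V.
Hypothesis Hbr : lie_bracket br.

Lemma brL x : lin (br x).
Proof. by case: Hbr => _ H _ _ c u v; rewrite H. Qed.
Lemma brLl z : lin (fun x => br x z).
Proof. by case: Hbr => H _ _ _ c u v; rewrite H. Qed.

Lemma brDl x y z : br (x + y) z = br x z + br y z.
Proof. exact: (linD (brLl z)). Qed.
Lemma brZl c x z : br (c *: x) z = c *: br x z.
Proof. exact: (linZ (brLl z)). Qed.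
Lemma brNl x z : br (- x) z = - br x z.
Proof. exact: (linN (brLl z)). Qed.
Lemma brBl x y z : br (x - y) z = br x z - br y z.
Proof. exact: (linB (brLl z)). Qed.
Lemma br0l z : br 0 z = 0.
Proof. exact: (lin0 (brLl z)). Qed.
Lemma brDr x y z : br z (x + y) = br z x + br z y.
Proof. exact: (linD (brL z)). Qed.
Lemma brZr c x z : br z (c *: x) = c *: br z x.
Proof. exact: (linZ (brL z)). Qed.
Lemma brNr x z : br z (- x) = - br z x.
Proof. exact: (linN (brL z)). Qed.
Lemma brBr x y z : br z (x - y) = br z x - br z y.
Proof. exact: (linB (brL z)). Qed.
Lemma br0r z : br z 0 = 0.
Proof. exact: (lin0 (brL z)). Qed.

Lemma br_anti x y : br x y = - br y x.
Proof.
case: Hbr => _ _ H0 _; have := H0 (x + y).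
rewrite brDl !brDr !H0 add0r addr0 => /eqP; rewrite addr_eq0 => /eqP //.
Qed.

Lemma brJ x y z : br x (br y z) = br (br x y) z + br y (br x z).
Proof.
case: Hbr => _ _ _ HJ; have := HJ x y z.
rewrite (br_anti z (br x y)) (br_anti z x) brNr => /eqP.
rewrite -addrA addr_eq0 => /eqP ->; rewrite opprD !opprK addrC //.
Qed.

Local Notation K := (killing br).

Lemma KE x y : K x y = trf (br x \o br y).
Proof. by []. Qed.

Lemma K_sym x y : K x y = K y x.
Proof. by rewrite !KE trf_comm //; apply: brL. Qed.

Lemma K_inv h x y : K (br h x) y + K x (br h y) = 0.
Proof.
rewrite !KE.
have E1 : trf (br (br h x) \o br y) =
   trf (br h \o (br x \o br y)) - trf (br x \o (br h \o br y)).
  rewrite -trfB; apply: trf_ext => u /=.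
  by rewrite (brJ h x (br y u)) addrK.
have E2 : trf (br x \o br (br h y)) =
   trf (br x \o (br h \o br y)) - trf ((br x \o br y) \o br h).
  rewrite -trfB; apply: trf_ext => u /=.
  by rewrite (brJ h y u) brDr addrK.
rewrite E1 E2 trf_comm; last 2 first.
- exact: brL.
- by apply: lin_comp; apply: brL.
by rewrite addrA subrK subrr.
Qed.

Lemma KDl x y z : K (x + y) z = K x z + K y z.
Proof.
by rewrite !KE /trf -big_split; apply: eq_bigr => i _ /=; rewrite brDl linearD.
Qed.
Lemma KZl c x z : K (c *: x) z = c * K x z.
Proof.
rewrite !KE /trf mulr_sumr; apply: eq_bigr => i _ /=.
by rewrite brZl linearZ.
Qed.
Lemma KNl x z : K (- x) z = - K x z.
Proof. by rewrite -scaleN1r KZl mulN1r. Qed.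
Lemma KBl x y z : K (x - y) z = K x z - K y z.
Proof. by rewrite KDl KNl. Qed.
Lemma K0l z : K 0 z = 0.
Proof. by rewrite -(scale0r 0) KZl mul0r. Qed.
Lemma KDr x y z : K z (x + y) = K z x + K z y.
Proof. by rewrite !(K_sym z) KDl. Qed.
Lemma KZr c x z : K z (c *: x) = c * K z x.
Proof. by rewrite !(K_sym z) KZl. Qed.
Lemma KNr x z : K z (- x) = - K z x.
Proof. by rewrite !(K_sym z) KNl. Qed.
Lemma KBr x y z : K z (x - y) = K z x - K z y.
Proof. by rewrite !(K_sym z) KBl. Qed.
Lemma K0r z : K z 0 = 0.
Proof. by rewrite K_sym K0l. Qed.

End Lie.

Section Roots.
Variables (br : V -> V -> V) (tau : V -> V) (A : V -> Prop) (X : V -> V).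
Hypothesis Hbr : lie_bracket br.
Hypothesis Htau : conjugation br tau.
Hypothesis Hneg : forall x, in_g tau x -> x != 0 -> killing br x x < 0.
Hypothesis HAg : forall x, A x -> in_g tau x.
Hypothesis HAs : real_subspace A.
Hypothesis HX : root_vectors br tau A X.
Local Notation K := (killing br).

Lemma tau0 : tau 0 = 0.
Proof.
case: Htau => HD _ _ _; have := HD 0 0; rewrite addr0 => H.
by move: H; rewrite -{1}[tau 0]addr0 => /addrI/esym.
Qed.

Lemma in_gD x y : in_g tau x -> in_g tau y -> in_g tau (x + y).
Proof. by case: Htau => HD _ _ _; rewrite /in_g HD => -> ->. Qed.

Lemma Kreal_diag x : in_g tau x -> K x x \is Num.real.
Proof.
move=> gx; have [->|nz] := eqVneq x 0; first by rewrite K0l // rpred0.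
exact/ltr0_real/Hneg.
Qed.

Lemma Kreal x y : in_g tau x -> in_g tau y -> K x y \is Num.real.
Proof.
move=> gx gy.
have E : K x y *+ 2 = K (x + y) (x + y) - K x x - K y y.
  rewrite KDl // !KDr // (K_sym Hbr y x).
  by rewrite mulr2n; ring.
rewrite -(@realrMn _ _ 2%N); last by [].
rewrite E; apply: rpredB; first apply: rpredB.
- by apply: Kreal_diag; apply: in_gD.
- exact: Kreal_diag.
- exact: Kreal_diag.
Qed.

Lemma A0 : A 0. Proof. by case: HAs. Qed.
Lemma AZ r x : A x -> A (rC r *: x). Proof. by case: HAs => _ _; apply. Qed.
Lemma rCN1 : rC (-1 : R) = -1.
Proof. by rewrite /rC rmorphN1. Qed.
Lemma AN x : A x -> A (- x).
Proof. by move=> Ax; rewrite -scaleN1r -rCN1; apply: AZ. Qed.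

Lemma root_ia a : is_root br A a -> exists2 a1, A a1 & a = 'i *: a1.
Proof. by case=> [[a1 Aa1 ->]] _ _; exists a1. Qed.

Lemma ia_aC a : in_ia A a -> in_aC A a.
Proof. by case=> a1 Aa1 ->; exists 0, a1; rewrite add0r; split => //; apply: A0. Qed.

Lemma root_aC a : is_root br A a -> in_aC A a.
Proof. by case=> Ha _ _; apply: ia_aC. Qed.

Lemma Kpos a : is_root br A a -> 0 < K a a.
Proof.
move=> ra; have [a1 Aa1 Ea] := root_ia ra.
have a1nz : a1 != 0.
  by apply: contraNneq (let: And3 _ nz _ := ra in nz) => a10; rewrite Ea a10 scaler0.
rewrite Ea KZl // KZr // mulrA mulCii mulN1r oppr_gt0.
by apply: Hneg => //; apply: HAg.
Qed.

Lemma negroot a : is_root br A a -> is_root br A (- a).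
Proof.
move=> ra; have [a1 Aa1 Ea] := root_ia ra.
case: ra => _ anz [X0 X0nz rsX0].
case: Htau => tD tZ tK tbr.
split.
- exists (- a1); first by apply: AN.
  by rewrite Ea scalerN.
- by rewrite oppr_eq0.
exists (tau X0).
  by apply: contraNneq X0nz => H; rewrite -[X0]tK H tau0.
move=> h [a0 [b0 [Aa0 Ab0 ->]]].
pose h' := a0 + 'i *: (- b0).
have h'C : in_aC A h' by exists a0, (- b0); split => //; apply: AN.
have Eh : tau h' = a0 + 'i *: b0.
  rewrite /h' tD tZ conjCi (HAg Aa0).
  have -> : tau (- b0) = - b0.
    by rewrite -scaleN1r tZ rmorphN1 (HAg Ab0).
  by rewrite scaleNr scalerN opprK.
rewrite -Eh -tbr rsX0 // tZ; congr (_ *: _).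
have r1 := Kreal (HAg Aa1) (HAg Aa0).
have r2 := Kreal (HAg Aa1) (HAg Ab0).
rewrite Eh /h' Ea KNl // !KZl // !KDr // !KZr // KNr //.
rewrite !rmorphM rmorphD rmorphM raddfN /= conjCi !conj_Creal //.
by rewrite mulrNN mulNr.
Qed.

Lemma Xwt a : is_root br A a -> forall h, in_aC A h -> br h (X a) = K a h *: X a.
Proof. by move=> ra; case: (HX ra). Qed.

Lemma Xnz a : is_root br A a -> X a != 0.
Proof. by move=> ra; case: (HX ra). Qed.

Fixpoint cseq (c m k : C) (n : nat) : C :=
  if n is n'.+1 then cseq c m k n' - c * (m + n'%:R * k) else 0.

Lemma sl2 a b : is_root br A a -> is_root br A b -> - a + b != 0 ->
  0 < K b a -> is_root br A (- a + b).
Proof.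
move=> ra rb nz mpos; apply: Classical_Prop.NNPP => nr.
have rna := negroot ra.
have [_ _ _ _ Hab] := HX rna.
have fv0 := (Hab b rb).2 nr nz.
have [_ _ _ ef _] := HX ra.
have aC := root_aC ra.
set e := X a; set f := X (- a); set v := X b.
set k := K a a; set m := K b a.
have kpos : 0 < k by apply: Kpos.
set c := 2 / k.
have cpos : 0 < c by rewrite divr_gt0.
have Hae : br a e = k *: e by apply: Xwt.
have Hav : br a v = m *: v by apply: Xwt.
pose vk n := iter n (br e) v.
have Hw : forall n, br a (vk n) = (m + n%:R * k) *: vk n.
  elim=> [|n IH]; first by rewrite mul0r addr0.
  rewrite /= brJ // Hae IH brZl // brZr // -scalerDl; congr (_ *: _).
  by rewrite -addn1 natrD; ring.
have Hf : forall n, br f (vk n) = cseq c m k n *: vk n.-1.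
  elim=> [|n IH]; first by rewrite /= scale0r.
  rewrite [vk n.+1]/= brJ // (br_anti Hbr f e) ef /coroot -/k -/c.
  rewrite brNl // brZl // [br a _]Hw IH brZr //.
  have -> : cseq c m k n *: br e (vk n.-1) = cseq c m k n *: vk n.
    by case: n {IH} => [|n]; rewrite /= ?scale0r.
  by rewrite scalerA -scaleNr -scalerDl /= addrC mulrC.
have cneg : forall n, cseq c m k n.+1 < 0.
  have pterm : forall n, 0 < c * (m + n%:R * k).
    move=> n; rewrite mulr_gt0 // ltr_wpDr // mulr_ge0 //; exact: ltW.
  elim=> [|n IH]; first by rewrite /= sub0r oppr_lt0 pterm.
  by rewrite /= subr_lt0 (lt_trans IH (pterm _)).
have vnz : forall n, vk n != 0.
  elim=> [|n IH]; first exact: Xnz.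
  apply/negP => /eqP H0.
  have := Hf n.+1; rewrite H0 br0r // => /esym/eqP.
  by rewrite scaler_eq0 (negbTE IH) orbF (lt_eqF (cneg n)).
apply: (@eig_indep (br a) vk (fun n => m + n%:R * k)).
- exact: brL.
- exact: vnz.
- exact: Hw.
move=> i j /addrI /(mulIf (lt0r_neq0 kpos)) /eqP.
by rewrite eqr_nat => /eqP.
Qed.

Lemma wt_br u w1 v w2 h : in_aC A h -> br h u = w1 *: u -> br h v = w2 *: v ->
  br h (br u v) = (w1 + w2) *: br u v.
Proof.
move=> _ Hu Hv; rewrite brJ // Hu Hv brZl // brZr // scalerDl //.
Qed.

Lemma orth u w1 v w2 h : br h u = w1 *: u -> br h v = w2 *: v -> w1 + w2 != 0 ->
  K u v = 0.
Proof.
move=> Hu Hv nz; have := K_inv Hbr h u v; rewrite Hu Hv KZl // KZr // -mulrDl.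
by move/eqP; rewrite mulf_eq0 (negbTE nz) => /eqP.
Qed.

Lemma atom_orth p1 p2 p3 h : is_root br A p1 -> is_root br A p2 -> is_root br A p3 ->
  in_aC A h -> K p1 h + K p2 h + K p3 h != 0 ->
  K (br (X p1) (X p2)) (X p3) = 0.
Proof.
move=> r1 r2 r3 hC nz.
apply: (@orth _ (K p1 h + K p2 h) _ (K p3 h) h) => //.
- by apply: wt_br => //; apply: Xwt.
- exact: Xwt.
Qed.

Definition lclosed (Q : V -> Prop) := [/\ Q 0, (forall x y, Q x -> Q y -> Q (x + y)) &
  (forall (c : C) x, Q x -> Q (c *: x))].

Lemma mN_ind (Q : V -> Prop) (S : V -> Prop) : lclosed Q ->
  (forall t (b : bool), S t -> Q (X (if b then - t else t))) ->
  forall s : seq (R * R * V), (forall t, t \in s -> S t.2) ->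
  Q (\sum_(t <- s) (rC t.1.1 *: Zv X t.2 + rC t.1.2 *: Wv X t.2)).
Proof.
rewrite /lclosed; case=> Q0 QD QZ HQ; elim=> [|t s IH] Hs; first by rewrite big_nil.
rewrite big_cons; apply: (QD); last by apply: IH => u us; apply: Hs; rewrite inE us orbT.
have St : S t.2 by apply: Hs; rewrite inE eqxx.
have Q1 := HQ _ false St; have Q2 := HQ _ true St; simpl in Q1, Q2.
apply: (QD); apply: (QZ).
- by rewrite /Zv -scaleN1r; apply: (QD) => //; apply: (QZ).
- by rewrite /Wv; apply: (QZ); apply: (QD).
Qed.

End Roots.
End Basics.

Lemma ratio_eq (R : rcfType) (x D : R[i]) (n : int) :
  D != 0 -> 2 * x / (2 * D) = n%:~R -> x = n%:~R * D.
Proof. by move=> Dnz <-; field. Qed.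

Lemma key_id (R : rcfType) (V : vectType R[i]) (a b : R[i]) (u w : V) :
  a *: ('i *: u - (-'i) *: w) + b *: ('i *: ('i *: u + (-'i) *: w)) =
  (-b) *: (u - w) + a *: ('i *: (u + w)).
Proof.
rewrite !(scalerDr, scalerN, scaleNr, scalerA, opprK, mulrA, mulCii, mulN1r, mulrN1, mulrN, mulNr).
by rewrite -!mulrA mulCii mulrN1 !scaleNr opprK addrC.
Qed.

Definition zs (b : bool) : int := if b then -1 else 1.

Lemma sumcase (b1 b2 b3 : bool) (mu mu' : int) :
  (mu = 1 \/ mu = 2) -> (mu' = 1 \/ mu' = 2) ->
  (zs b1 * 2 + zs b2 + zs b3 != 0) || (zs b1 + zs b2 * mu + zs b3 * mu' != 0).
Proof.
by case=> ->; case=> ->; case: b1; case: b2; case: b3; rewrite /zs; vm_compute.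
Qed.

Theorem lemma3p5 (R : rcfType) (V : vectType R[i]) (br : V -> V -> V)
  (tau : V -> V) (A : V -> Prop) (P : V -> Prop) (X : V -> V) (beta delta : V) :
  lie_bracket br -> conjugation br tau -> compact_simple br tau ->
  (forall n : nat, ~ iso_to_sp br tau n) ->
  max_abelian br tau A ->
  positive_system br A P ->
  highest_root br A P beta ->
  root_vectors br tau A X ->
  in_Sigma_n br A beta 1 delta ->
  killing br delta delta = killing br beta beta ->
  [/\ (forall x, in_mN br A X P beta delta x ->
         in_mN br A X P beta delta (br ('i *: coroot br beta) x)),
      (forall x y, in_mN br A X P beta delta x -> in_mN br A X P beta delta y ->
         ip br (br (Zv X beta) x) y = 0) &
      (forall x y, in_mN br A X P beta delta x -> in_mN br A X P beta delta y ->
         ip br (br (Wv X beta) x) y = 0)].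
Proof.
move=> Hbr Htau [Hneg _ _] _ [HAs HAg _ _] [H0 _ [_ HP]] [Pb _] HX [rd Hd] Hdd.
have rb : is_root br A beta by have [] := (HP beta).1 Pb.
have negr := negroot Hbr Htau Hneg HAg HAs.
have sl := sl2 Hbr Htau Hneg HAg HAs HX.
have kp := Kpos Hbr Hneg HAg.
have Bpos : 0 < killing br beta beta by apply: kp.
set D := killing br beta delta.
have HB : killing br beta beta = 2 * D.
  by apply/esym/divr1_eq; rewrite Hd.
have Dpos : 0 < D by move: Bpos; rewrite HB pmulr_rgt0.
have Dnz : D != 0 by rewrite gt_eqF.
have HB' : killing br beta beta = (2%:Z)%:~R * D by rewrite HB.
have Hdd' : killing br delta delta = (2%:Z)%:~R * D by rewrite Hdd HB.
pose inS t := t = delta \/ in_Delta_plus br A P beta delta t \/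
                         in_Delta_minus br A P beta delta t.
have Kdb : killing br delta beta = D by rewrite (K_sym Hbr).
have HS : forall t, inS t -> [/\ is_root br A t, killing br t beta = D &
     exists2 mu : int, (mu = 1 \/ mu = 2) & killing br t delta = mu%:~R * D].
  move=> t [->|[[g [Pg [rg Sg0] [_ Sg1] ->]]|[g [Pg [rg Sg0] [_ Sg1] ->]]]].
  - split => //; exists 2; [by right | by rewrite Hdd HB].
  - rewrite HB in Sg0; rewrite Hdd HB in Sg1.
    have Kbg := ratio_eq Dnz Sg0; rewrite mul0r in Kbg.
    have Kdg := ratio_eq Dnz Sg1; rewrite mul1r in Kdg.
    split.
    + rewrite addrC; apply: sl => //; last by rewrite Kdg.
      apply/eqP => /eqP; rewrite addrC subr_eq0 => /eqP Edg.
      move: Kdg; rewrite -Edg Hdd HB => H.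
      move: Dnz; rewrite {1}(_ : D = 2 * D - D); last by ring.
      by rewrite H subrr eqxx.
    + by rewrite KBl // Kdb (K_sym Hbr g) Kbg subr0.
    + exists 1; first by left.
      by rewrite KBl // Hdd HB (K_sym Hbr g) Kdg mul1r; ring.
  - rewrite HB in Sg0; rewrite Hdd HB in Sg1.
    have Kbg := ratio_eq Dnz Sg0; rewrite mul0r in Kbg.
    have Kdg := ratio_eq Dnz Sg1; rewrite mulN1r in Kdg.
    split.
    + rewrite -[g]opprK addrC; apply: sl => //; first exact: negr.
        apply/eqP; rewrite opprK => Egd.
        have Eg : g = - delta by apply/eqP; rewrite -addr_eq0 Egd.
        move: Kdg; rewrite Eg KNr // Hdd HB => /oppr_inj H.
        move: Dnz; rewrite {1}(_ : D = 2 * D - D); last by ring.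
        by rewrite H subrr eqxx.
      by rewrite KNr // Kdg opprK.
    + by rewrite KDl // Kdb (K_sym Hbr g) Kbg addr0.
    + exists 1; first by left.
      by rewrite KDl // Hdd HB (K_sym Hbr g) Kdg mul1r; ring.
have HSr : forall t (b : bool), inS t -> is_root br A (if b then - t else t).
  by move=> t [] /HS [rt _ _] //; apply: negr.
have Ksv : forall (b : bool) x h,
    killing br (if b then - x else x) h = (zs b)%:~R * killing br x h.
  by case=> x h /=; rewrite ?KNl // ?mulN1r ?mul1r.
have rbsv : forall b : bool, is_root br A (if b then - beta else beta).
  by case => //; apply: negr.
have aCb : in_aC A beta by apply: (ia_aC HAs); case: rb.
have aCd : in_aC A delta by apply: (ia_aC HAs); case: rd.
have atom : forall (b1 b2 b3 : bool) t t', inS t -> inS t' ->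
    killing br (br (X (if b1 then - beta else beta)) (X (if b2 then - t else t)))
               (X (if b3 then - t' else t')) = 0.
  move=> b1 b2 b3 t t' St St'.
  have [rt Ktb [mu Hmu Ktd]] := HS t St.
  have [rt' Kt'b [mu' Hmu' Kt'd]] := HS t' St'.
  case/orP: (sumcase b1 b2 b3 Hmu Hmu') => nz.
  - apply: (atom_orth Hbr HX (rbsv b1) (HSr t b2 St) (HSr t' b3 St') aCb).
    rewrite !Ksv HB Ktb Kt'b.
    rewrite (_ : _ + _ = (zs b1 * 2 + zs b2 + zs b3)%:~R * D).
      by rewrite mulf_neq0 // intr_eq0.
    by rewrite !intrD !intrM; ring.
  - apply: (atom_orth Hbr HX (rbsv b1) (HSr t b2 St) (HSr t' b3 St') aCd).
    rewrite !Ksv -/D Ktd Kt'd.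
    rewrite (_ : _ + _ = (zs b1 + zs b2 * mu + zs b3 * mu')%:~R * D).
      by rewrite mulf_neq0 // intr_eq0.
    by rewrite !intrD !intrM; ring.
have cl1 : forall p q, lclosed (fun u => killing br (br u p) q = 0).
  move=> p q; split.
  - by rewrite br0l // K0l.
  - by move=> x y Hx Hy; rewrite brDl // KDl // Hx Hy addr0.
  - by move=> c x Hx; rewrite brZl // KZl // Hx mulr0.
have cl2 : forall u q, lclosed (fun x => killing br (br u x) q = 0).
  move=> u q; split.
  - by rewrite br0r // K0l.
  - by move=> x y Hx Hy; rewrite brDr // KDl // Hx Hy addr0.
  - by move=> c x Hx; rewrite brZr // KZl // Hx mulr0.
have cl3 : forall w, lclosed (fun y => killing br w y = 0).
  move=> w; split.
  - by rewrite K0r.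
  - by move=> x y Hx Hy; rewrite KDr // Hx Hy addr0.
  - by move=> c x Hx; rewrite KZr // Hx mulr0.
have Hu : forall u, (forall (b2 b3 : bool) t t', inS t -> inS t' ->
      killing br (br u (X (if b2 then - t else t))) (X (if b3 then - t' else t')) = 0) ->
    forall x y, in_mN br A X P beta delta x -> in_mN br A X P beta delta y ->
    ip br (br u x) y = 0.
  move=> u Hu0 x y [s [Hs ->]] [s' [Hs' ->]].
  rewrite /ip; apply/eqP; rewrite oppr_eq0; apply/eqP.
  apply: (mN_ind (S := inS) (cl3 _) _ Hs') => t' b3 St'.
  apply: (mN_ind (S := inS) (cl2 _ _) _ Hs) => t b2 St.
  exact: Hu0.
split.
- have [b1 Ab1 Eb] := root_ia rb.
  have Bre : killing br beta beta \is Num.real by apply: gtr0_real.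
  have [r Er] : exists r : R, - (2 / killing br beta beta) = (r%:C)%C.
    by apply/complex_realP; rewrite rpredN rpredM ?rpredV // realn.
  have hE : 'i *: coroot br beta = rC r *: b1.
    rewrite /coroot Eb !scalerA /rC -Er; congr (_ *: _).
    by rewrite -Eb mulrAC mulCii mulN1r.
  have hC : in_aC A ('i *: coroot br beta).
    exists (rC r *: b1), 0; split.
    + by case: HAs => _ _; apply.
    + by case: HAs.
    + by rewrite scaler0 addr0.
  have Kth : forall t, inS t -> killing br t ('i *: coroot br beta) = 'i.
    move=> t /HS [_ Ktb _]; rewrite /coroot !KZr // Ktb HB; by field.
  have brX : forall t, inS t -> br ('i *: coroot br beta) (X t) = 'i *: X t.
    by move=> t St; have [rt _ _] := HS t St; rewrite (Xwt HX rt) // Kth.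
  have brXn : forall t, inS t ->
      br ('i *: coroot br beta) (X (- t)) = - 'i *: X (- t).
    move=> t St; have [rt _ _] := HS t St.
    by rewrite (Xwt HX (negr _ rt)) // KNl // Kth.
  move=> x [s [Hs ->]].
  exists [seq ((- t.1.2, t.1.1), t.2) | t <- s]; split.
    by move=> t /mapP [u us ->] /=; exact: Hs us.
  rewrite big_map lin_sum; last exact: (brL Hbr).
  apply: eq_big_seq => u us /=.
  have Su : inS u.2 := Hs u us.
  rewrite (brDr Hbr) !(brZr Hbr) /Zv (brBr Hbr) (brDr Hbr) brX // brXn //.
  by rewrite /rC rmorphN key_id.
- apply: Hu => b2 b3 t t' St St'.
  have [C0 CD CZ] := cl1 (X (if b2 then - t else t)) (X (if b3 then - t' else t')).
  rewrite /Zv -scaleN1r; apply: CD; first exact: (atom false).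
  by apply: CZ; exact: (atom true).
- apply: Hu => b2 b3 t t' St St'.
  have [C0 CD CZ] := cl1 (X (if b2 then - t else t)) (X (if b3 then - t' else t')).
  rewrite /Wv; apply: CZ; apply: CD; first exact: (atom false).
  exact: (atom true).
Qed.
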